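(* Let $m\ge 2$ and $n\ge 3$ be integers. Then $\chi_{ei}(P_m\square C_n)=6$ if $n=3$; $=5$ if $n=5$; $=4$ if $n=7$; $=2$ if $n$ is even; and $=3$ if $n$ is odd and $n\ge 9$.
   Context: All graphs are finite and simple. $P_k$ and $C_k$ denote the path and the cycle on $k$ vertices. A path $P_4$ in $G$ is a sequence $uxyv$ of four distinct vertices with $ux,xy,yv\in E(G)$; $u,v$ are its end vertices. An $e$-injective $k$-coloring of $G$ is a function $f:V(G)\to\{1,\dots,k\}$ with $f(u)\ne f(v)$ whenever $u,v$ are the end vertices of some path $P_4$ in $G$; $\chi_{ei}(G)$ is the least such $k$. In the Cartesian product $G\square H$ two vertices are adjacent if they are adjacent in one coordinate and equal in the other. *)

(* Defs.v *)
From mathcomp Require Import all_boot.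
Set Implicit Arguments. Unset Strict Implicit. Unset Printing Implicit Defensive.

Section EI.
Variable T : finType.
Variable e : rel T.

Definition p4_ends (u v : T) : bool :=
  [exists x : T, exists y : T,
     [&& uniq [:: u; x; y; v], e u x, e x y & e y v]].

Definition ei_coloring (k : nat) (f : T -> 'I_k) : bool :=
  [forall u, forall v, p4_ends u v ==> (f u != f v)].

Definition ei_colorable (k : nat) : bool :=
  [exists f : {ffun T -> 'I_k}, ei_coloring f].

Lemma ei_colorable_card : exists k, ei_colorable k.
Proof.
exists #|T|; apply/existsP; exists (finfun (@enum_rank T)).
apply/forallP => u; apply/forallP => v; apply/implyP.
move=> /existsP [x /existsP [y /and4P [Hu _ _ _]]]; rewrite !ffunE.
apply/negP => /eqP /enum_rank_inj Huv; move: Hu; rewrite Huv /=.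
by rewrite !inE eqxx !orbT.
Qed.

Definition chi_ei : nat := ex_minn ei_colorable_card.
End EI.

Definition path_rel (m : nat) : rel 'I_m :=
  fun i j => (i.+1 == j :> nat) || (j.+1 == i :> nat).

Definition cycle_rel (n : nat) : rel 'I_n :=
  fun i j => (i.+1 %% n == j :> nat) || (j.+1 %% n == i :> nat).

Definition cart_rel (A B : finType) (eA : rel A) (eB : rel B) : rel (A * B) :=
  fun u v => ((u.1 == v.1) && eB u.2 v.2) || ((u.2 == v.2) && eA u.1 v.1).
Arguments path_rel m : clear implicits.
Arguments cycle_rel n : clear implicits.

(* Main.v *)
Require Import Defs.
From mathcomp Require Import all_boot.
From mathcomp Require Import zify.
Set Implicit Arguments. Unset Strict Implicit. Unset Printing Implicit Defensive.

Definition up (d : 'I_4) : nat := (val d == 2).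
Definition dn (d : 'I_4) : nat := (val d == 3).
Definition hz (n : nat) (d : 'I_4) : nat := (val d == 0) + n.-1 * (val d == 1).

Definition nondeg (n : nat) (d1 d2 d3 : 'I_4) : bool :=
  ~~ ((up d1 + up d2 + up d3 == dn d1 + dn d2 + dn d3)
      && ((hz n d1 + hz n d2 + hz n d3) %% n == 0)).

Definition ordm (p j : nat) : 'I_p.+1 := Ordinal (ltn_pmod j (ltn0Sn p)).
Lemma ordm_val p (i : 'I_p.+1) : ordm p (val i) = i.
Proof. by apply: val_inj; rewrite /= modn_small. Qed.
Lemma val_ordm p j : val (ordm p j) = j %% p.+1.
Proof. by []. Qed.

Definition dirs : seq 'I_4 := [seq ordm 3 j | j <- iota 0 4].
Lemma mem_dirs d : d \in dirs.
Proof. by rewrite -(ordm_val d); apply: map_f; rewrite mem_iota /= ltn_ord. Qed.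

Section Gen.
Variables (m n : nat).
Hypothesis n_gt1 : 1 < n.
Notation T := ('I_m * 'I_n)%type.
Notation E := (cart_rel (path_rel m) (cycle_rel n)).

Definition mv (d : 'I_4) (x y : T) : bool :=
  (val y.1 + dn d == val x.1 + up d) && (val y.2 == (val x.2 + hz n d) %% n).

Lemma step_mv x y : E x y -> exists d, mv d x y.
Proof.
case: x y => [a b] [a' b']; rewrite /cart_rel /path_rel /cycle_rel /=.
case/orP => /andP [/eqP <- H].
- case/orP: H => /eqP H.
  + by exists (Ordinal (isT : 0 < 4)); rewrite /mv /up /dn /hz /= muln0 addn0 -H addn1 !eqxx.
  + exists (Ordinal (isT : 1 < 4)); rewrite /mv /up /dn /hz /= addn0 eqxx /= muln1.
    apply/eqP; rewrite -H.
    have hb' := ltn_ord b'.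
    case: (ltnP b'.+1 n) => hlt.
    * rewrite (modn_small hlt) add0n (_ : b'.+1 + n.-1 = b' + n); last by lia.
      by rewrite modnDr modn_small.
    * have -> : b'.+1 = n by lia.
      by rewrite modnn !add0n modn_small //; lia.
- case/orP: H => /eqP H.
  + exists (Ordinal (isT : 2 < 4)); rewrite /mv /up /dn /hz /= muln0 !addn0 modn_small //.
    by apply/andP; split; apply/eqP; lia.
  + exists (Ordinal (isT : 3 < 4)); rewrite /mv /up /dn /hz /= muln0 !addn0 modn_small //.
    by apply/andP; split; apply/eqP; lia.
Qed.

Lemma mv3 d1 d2 d3 (u x y v : T) : mv d1 u x -> mv d2 x y -> mv d3 y v ->
  val v.1 + (dn d1 + dn d2 + dn d3) = val u.1 + (up d1 + up d2 + up d3) /\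
  val v.2 = (val u.2 + (hz n d1 + hz n d2 + hz n d3)) %% n.
Proof.
move=> /andP [/eqP h1 /eqP c1] /andP [/eqP h2 /eqP c2] /andP [/eqP h3 /eqP c3].
split; first by lia.
by rewrite c3 c2 c1 modnDml -addnA modnDml !addnA.
Qed.

Lemma mv3_nondeg d1 d2 d3 (u x y v : T) : mv d1 u x -> mv d2 x y -> mv d3 y v ->
  u != v -> nondeg n d1 d2 d3.
Proof.
move=> H1 H2 H3 huv; have [hr hc] := mv3 H1 H2 H3.
apply/negP => /andP [/eqP hud /eqP hm]; move/negP: huv; apply.
case: u v hr hc {H1 H2 H3} => [a b] [a' b'] /= hr hc.
apply/eqP; congr pair; apply: val_inj => /=; first by lia.
by rewrite hc -modnDmr hm addn0 modn_small.
Qed.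

Variables (S : finType) (k : nat) (pi : T -> S) (kap : S -> 'I_k)
  (succ : S -> 'I_4 -> seq S) (nd : 'I_4 -> 'I_4 -> 'I_4 -> bool).
Hypothesis Hs : forall d x y, mv d x y -> pi y \in succ (pi x) d.
Hypothesis Hnd : forall d1 d2 d3, nondeg n d1 d2 d3 -> nd d1 d2 d3.

Variable es : seq S.
Hypothesis Hes : forall s, s \in es.

Definition chk := all (fun s0 : S => all (fun d1 : 'I_4 => all (fun d2 : 'I_4 =>
  all (fun d3 : 'I_4 =>
  nd d1 d2 d3 ==> all (fun s1 => all (fun s2 => all (fun s3 => kap s0 != kap s3)
     (succ s2 d3)) (succ s1 d2)) (succ s0 d1)) dirs) dirs) dirs) es.

Lemma gen_coloring (f : T -> 'I_k) : (forall u, f u = kap (pi u)) -> chk ->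
  ei_coloring E f.
Proof.
move=> hf hchk; apply/forallP => u; apply/forallP => v; apply/implyP.
case/existsP => x /existsP [y /and4P [hu e1 e2 e3]].
have [d1 m1] := step_mv e1; have [d2 m2] := step_mv e2; have [d3 m3] := step_mv e3.
have huv : u != v by move: hu; rewrite /= !inE; case/and4P => /norP [_ /norP [_ ]].
have hnd := Hnd (mv3_nondeg m1 m2 m3 huv).
move/allP/(_ (pi u) (Hes _))/allP/(_ d1 (mem_dirs _)): hchk.
move/allP/(_ d2 (mem_dirs _))/allP/(_ d3 (mem_dirs _)).
rewrite hnd /= => /allP /(_ _ (Hs m1)) /allP /(_ _ (Hs m2)) /allP /(_ _ (Hs m3)).
by rewrite !hf.
Qed.

End Gen.

Lemma row_step (d : 'I_4) (a a' : nat) : a' + dn d = a + up d ->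
  a' %% 2 = (a %% 2 + up d + dn d) %% 2.
Proof. by case: d => [[|[|[|[|?]]]] ?] //=; rewrite /up /dn /=; lia. Qed.

Section Fixed.
Variables (m n' k : nat).
Hypothesis n_gt1 : 0 < n'.
Variable g : 'I_2 -> 'I_n'.+1 -> 'I_k.

Definition piF (x : 'I_m * 'I_n'.+1) : 'I_2 * 'I_n'.+1 := (ordm 1 x.1, x.2).
Definition kapF (s : 'I_2 * 'I_n'.+1) : 'I_k := g s.1 s.2.
Definition succF (s : 'I_2 * 'I_n'.+1) (d : 'I_4) : seq ('I_2 * 'I_n'.+1) :=
  [:: (ordm 1 (s.1 + up d + dn d), ordm n' (s.2 + hz n'.+1 d))].

Lemma HsF d x y : mv d x y -> piF y \in succF (piF x) d.
Proof.
rewrite /mv => /andP [/eqP h1 /eqP h2]; rewrite mem_seq1; apply/eqP.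
congr pair; apply: val_inj; rewrite /= ?h2 //.
exact: row_step.
Qed.

Definition esF : seq ('I_2 * 'I_n'.+1) :=
  [seq (ordm 1 i, ordm n' j) | i <- iota 0 2, j <- iota 0 n'.+1].
Lemma esF_all s : s \in esF.
Proof.
case: s => i j; rewrite -(ordm_val i) -(ordm_val j).
by apply: allpairs_f; rewrite mem_iota /= ltn_ord.
Qed.

Lemma fixed_colorable :
  chk kapF succF (nondeg n'.+1) esF ->
  ei_colorable (cart_rel (path_rel m) (cycle_rel n'.+1)) k.
Proof.
move=> hc; apply/existsP; exists [ffun u => kapF (piF u)].
apply: (@gen_coloring m n'.+1 n_gt1 _ k piF kapF succF (nondeg n'.+1) HsF
  (fun _ _ _ h => h) esF esF_all) => //.
by move=> u; rewrite ffunE.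
Qed.
End Fixed.

Definition tab (n k : nat) (rows : seq (seq nat)) (r : 'I_2) (b : 'I_n.+1) : 'I_k.+1 :=
  ordm k (nth 0 (nth [::] rows r) b).

Definition rows3 := [:: [:: 0;1;2]; [:: 3;4;5]].
Definition rows5 := [:: [:: 0;1;2;3;4]; [:: 1;2;3;4;0]].
Definition rows7 := [:: [:: 0;1;0;1;2;3;2]; [:: 1;0;1;0;3;2;3]].
Definition rows9 := [:: [:: 0;1;0;1;2;1;2;0;2]; [:: 1;0;1;2;1;2;0;2;0]].
Definition rows11 := [:: [:: 0;1;0;1;0;1;2;1;2;0;2]; [:: 1;0;1;0;1;2;1;2;0;2;0]].

Lemma chk3 : chk (kapF (@tab 2 5 rows3)) (@succF 2) (nondeg 3) (@esF 2). Proof. by vm_compute. Qed.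
Lemma chk5 : chk (kapF (@tab 4 4 rows5)) (@succF 4) (nondeg 5) (@esF 4). Proof. by vm_compute. Qed.
Lemma chk7 : chk (kapF (@tab 6 3 rows7)) (@succF 6) (nondeg 7) (@esF 6). Proof. by vm_compute. Qed.
Lemma chk9 : chk (kapF (@tab 8 2 rows9)) (@succF 8) (nondeg 9) (@esF 8). Proof. by vm_compute. Qed.
Lemma chk11 : chk (kapF (@tab 10 2 rows11)) (@succF 10) (nondeg 11) (@esF 10). Proof. by vm_compute. Qed.

Section Even.
Variables (m n : nat).
Hypothesis n_gt1 : 1 < n.
Hypothesis n_even : ~~ odd n.

Definition piE (x : 'I_m * 'I_n) : 'I_2 := ordm 1 (x.1 + x.2).
Definition succE (s : 'I_2) (d : 'I_4) : seq 'I_2 := [:: ordm 1 (s + 1)].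
Definition esE : seq 'I_2 := [seq ordm 1 j | j <- iota 0 2].

Lemma HsE d x y : mv d x y -> piE y \in succE (piE x) d.
Proof.
rewrite /mv => /andP [/eqP h1 /eqP h2]; rewrite mem_seq1; apply/eqP.
apply: val_inj; rewrite /= modnDml.
have hn : n %% 2 = 0 by rewrite modn2; case: (odd n) n_even.
have h3 : y.2 %% 2 = (x.2 + hz n d) %% 2.
  by rewrite h2; apply/eqP; rewrite modn_dvdm // /dvdn hn.
clear h2; move: h1 h3; case: d => [[|[|[|[|?]]]] ?] //=; rewrite /up /dn /hz /=; lia.
Qed.

Lemma even_colorable : ei_colorable (cart_rel (path_rel m) (cycle_rel n)) 2.
Proof.
apply/existsP; exists [ffun u => piE u].
apply: (@gen_coloring m n n_gt1 _ 2 piE id succE (fun _ _ _ => true) HsE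
  (fun _ _ _ _ => isT) esE) => //.
- by move=> s; rewrite -(ordm_val s); apply: map_f; rewrite mem_iota /= ltn_ord.
- by move=> u; rewrite ffunE.
Qed.
End Even.

Definition cls (n b : nat) : nat :=
  if b <= 8 then b else if b + 3 < n then (if b %% 2 == 1 then 9 else 10) else b + 14 - n.

Definition trans (d c c' : nat) : bool :=
  if d == 0 then [|| (c < 8) && (c' == c.+1), (c == 8) && (c' == 9),
     (c == 9) && ((c' == 10) || (c' == 11)), (c == 10) && (c' == 9),
     (c == 11) && (c' == 12), (c == 12) && (c' == 13) | (c == 13) && (c' == 0)]
  else if d == 1 then [|| (c == 0) && (c' == 13), [&& 0 < c, c <= 8 & c' == c.-1],
     (c == 9) && ((c' == 8) || (c' == 10)), (c == 10) && (c' == 9),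
     (c == 11) && (c' == 9), (c == 12) && (c' == 11) | (c == 13) && (c' == 12)]
  else c' == c.

Definition rowsO := [:: [:: 1;2;1;2;0;2]; [:: 2;1;2;0;2;0]].
Definition parO := [:: 0;1;0;1;0;1;0;1;0;1;0;0;1;0].
Definition kapO (s : 'I_2 * 'I_14) : 'I_3 :=
  ordm 2 (if s.2 < 6 then nth 0 (nth [::] rowsO s.1) s.2 else (s.1 + nth 0 parO s.2) %% 2).
Definition succO (s : 'I_2 * 'I_14) (d : 'I_4) : seq ('I_2 * 'I_14) :=
  [seq (ordm 1 (s.1 + up d + dn d), ordm 13 c') | c' <- iota 0 14 & trans d s.2 c'].
Definition esO : seq ('I_2 * 'I_14) := [seq (ordm 1 i, ordm 13 j) | i <- iota 0 2, j <- iota 0 14].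

Lemma chkO : chk kapO succO (fun _ _ _ => true) esO.
Proof. by vm_compute. Qed.

Section Odd.
Variables (m n : nat).
Hypothesis n_ge : 13 <= n.
Hypothesis n_odd : odd n.

Lemma cls_spec b : b < n ->
  (b <= 8 /\ cls n b = b) \/
  (8 < b /\ b + 3 < n /\ b %% 2 = 1 /\ cls n b = 9) \/
  (8 < b /\ b + 3 < n /\ b %% 2 = 0 /\ cls n b = 10) \/
  (8 < b /\ n <= b + 3 /\ cls n b = b + 14 - n).
Proof.
move=> hb; rewrite /cls; case: ifP => h1; first by left.
case: ifP => h2; last by right; right; right; lia.
case: ifP => /eqP h3; first by right; left; lia.
by right; right; left; lia.
Qed.

Definition piO (x : 'I_m * 'I_n) : 'I_2 * 'I_14 := (ordm 1 x.1, ordm 13 (cls n x.2)).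

Ltac ctac hs hs' := move: hs hs';
  case=> [[? ->]|[[? [? [? ->]]]|[[? [? [? ->]]]|[? [? ->]]]]];
  case=> [[? ->]|[[? [? [? ->]]]|[[? [? [? ->]]]|[? [? ->]]]]]; lia.

Lemma cls_trans (d : 'I_4) (b : 'I_n) : trans d (cls n b) (cls n ((b + hz n d) %% n)).
Proof.
have hn : n %% 2 = 1 by rewrite modn2 n_odd.
have hb := ltn_ord b.
have hs := cls_spec hb.
case: d => [[|[|[|[|?]]]] ?] //=; rewrite /hz /trans /=.
- rewrite muln0 addn0.
  case: (ltnP (b + 1) n) => hl.
  + rewrite modn_small //; have hs' := cls_spec hl; ctac hs hs'.
  + have e : b + 1 = n by lia.
    rewrite e modnn; have hs' := cls_spec (leq_trans (isT : 0 < 13) n_ge); ctac hs hs'.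
- rewrite add0n muln1.
  case: (posnP b) => hb0.
  + rewrite hb0 in hs *; rewrite add0n modn_small; last by lia.
    have hs' : n.-1 < n by lia.
    move/cls_spec: hs' => hs'; ctac hs hs'.
  + have -> : b + n.-1 = b.-1 + n by lia.
    rewrite modnDr modn_small; last by lia.
    have hs' : b.-1 < n by lia.
    move/cls_spec: hs' => hs'; ctac hs hs'.
- by rewrite muln0 !addn0 modn_small.
- by rewrite muln0 !addn0 modn_small.
Qed.

Lemma HsO d x y : mv d x y -> piO y \in succO (piO x) d.
Proof.
rewrite /mv => /andP [/eqP h1 /eqP h2].
have hc : cls n y.2 < 14.
  by have := cls_spec (ltn_ord y.2); have := ltn_ord y.2; lia.
have hcx : cls n x.2 < 14.
  by have := cls_spec (ltn_ord x.2); have := ltn_ord x.2; lia.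
apply/mapP; exists (cls n y.2).
  rewrite mem_filter mem_iota /= hc andbT modn_small // h2.
  exact: cls_trans.
congr pair; apply: val_inj; rewrite !val_ordm.
  by rewrite (row_step h1).
Qed.

Lemma odd_colorable : ei_colorable (cart_rel (path_rel m) (cycle_rel n)) 3.
Proof.
apply/existsP; exists [ffun u => kapO (piO u)].
have n1 : 1 < n by lia.
apply: (@gen_coloring m n n1 _ 3 piO kapO succO (fun _ _ _ => true) HsO
  (fun _ _ _ _ => isT) esO).
- case=> i j; rewrite -(ordm_val i) -(ordm_val j).
  by apply: allpairs_f; rewrite mem_iota /= ltn_ord.
- by move=> u; rewrite ffunE.
- exact: chkO.
Qed.
End Odd.

Lemma colorable_mono (T : finType) (e : rel T) j k :
  j <= k -> ei_colorable e j -> ei_colorable e k.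
Proof.
move=> hjk /existsP [f hf]; apply/existsP; exists [ffun u => widen_ord hjk (f u)].
apply/forallP => u; apply/forallP => v; apply/implyP => huv.
move/forallP/(_ u)/forallP/(_ v)/implyP/(_ huv): hf.
by rewrite !ffunE.
Qed.

Lemma chi_eq (T : finType) (e : rel T) k :
  ei_colorable e k -> ~~ ei_colorable e k.-1 -> chi_ei e = k.
Proof.
move=> hk hk1; rewrite /chi_ei; case: ex_minnP => c hc hmin.
have := hmin _ hk => hck; apply/eqP; rewrite eqn_leq hck /=.
case: (leqP k c) => // hlt.
have hc1 : c <= k.-1 by rewrite -ltnS (ltn_predK hlt).
by rewrite (colorable_mono hc1 hc) in hk1.
Qed.

Lemma p4_has (T : finType) (e : rel T) (l : seq T) u v :
  has (fun x => has (fun y => [&& uniq [:: u; x; y; v], e u x, e x y & e y v]) l) l ->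
  p4_ends e u v.
Proof.
case/hasP => x _ /hasP [y _ h]; apply/existsP; exists x; apply/existsP; exists y; exact: h.
Qed.

Fixpoint allseqs (len k : nat) : seq (seq nat) :=
  if len is len'.+1 then [seq c :: t | c <- iota 0 k, t <- allseqs len' k] else [:: [::]].

Lemma mem_allseqs k (s : seq nat) : all (fun x => x < k) s -> s \in allseqs (size s) k.
Proof.
elim: s => [|x s IH] //= /andP [hx hs].
by apply: allpairs_f; [rewrite mem_iota | exact: IH].
Qed.

Section LB.
Variables (m n : nat).
Hypothesis hm : 1 < m.
Hypothesis hn : 2 < n.
Notation E := (cart_rel (path_rel m) (cycle_rel n)).

Definition o0 : 'I_m := Ordinal (ltnW hm).
Definition o1 : 'I_m := Ordinal hm.
Lemma n_pos : 0 < n. Proof. by apply: leq_trans hn. Qed.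
Definition inZ (i : nat) : 'I_n := Ordinal (ltn_pmod i n_pos).

Lemma inZ_mod i : inZ (i %% n) = inZ i.
Proof. by apply: val_inj; rewrite /= modn_mod. Qed.

Lemma inZ_neq i t : 0 < t < n -> (inZ i == inZ (i + t)) = false.
Proof.
move=> ht; apply/negP => /eqP /(congr1 val) /= /eqP.
rewrite -[X in X == _ %[mod n]]addn0 eqn_modDl mod0n modn_small; lia.
Qed.

Lemma cyc_S i : cycle_rel n (inZ i) (inZ i.+1).
Proof. by rewrite /cycle_rel /= -[(i %% n).+1]addn1 modnDml addn1 eqxx. Qed.

Lemma P1 i : p4_ends E (o0, inZ i) (o0, inZ i.+1).
Proof.
apply/existsP; exists (o1, inZ i); apply/existsP; exists (o1, inZ i.+1).
rewrite /= !inE !xpair_eqE /cart_rel /path_rel /= !eqxx /= cyc_S.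
have := inZ_neq i (t := 1); rewrite addn1 => ->; last by lia.
by [].
Qed.

Lemma inZ_neq' a b : a < b < a + n -> (inZ a == inZ b) = false.
Proof. move=> h; have -> : b = a + (b - a) by lia. by apply: inZ_neq; lia. Qed.

Lemma P3 i : 3 < n -> p4_ends E (o0, inZ i) (o0, inZ (i + 3)).
Proof.
move=> h3.
apply/existsP; exists (o0, inZ (i + 1)); apply/existsP; exists (o0, inZ (i + 2)).
have c1 : cycle_rel n (inZ i) (inZ (i + 1)) by rewrite addn1; apply: cyc_S.
have c2 : cycle_rel n (inZ (i + 1)) (inZ (i + 2)) by rewrite [i + 2]addnS; apply: cyc_S.
have c3 : cycle_rel n (inZ (i + 2)) (inZ (i + 3)) by rewrite [i + 3]addnS; apply: cyc_S.
rewrite /= !inE !xpair_eqE /cart_rel /path_rel /= c1 c2 c3.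
rewrite !inZ_neq' //; lia.
Qed.
Lemma colP (k : nat) (f : {ffun 'I_m * 'I_n -> 'I_k}) : ei_coloring E f ->
  forall u v, p4_ends E u v -> f u != f v.
Proof. by move=> hf u v huv; move/forallP/(_ u)/forallP/(_ v)/implyP: hf; apply. Qed.

Lemma LB1 : ~~ ei_colorable E 1.
Proof.
apply/negP => /existsP [f /colP hf].
by have := hf _ _ (P1 0); rewrite (ord1 (f _)) (ord1 (f (o0, inZ 1))) eqxx.
Qed.

Lemma LB2 : odd n -> ~~ ei_colorable E 2.
Proof.
move=> hodd; apply/negP => /existsP [f /colP hf].
pose H i := val (f (o0, inZ i)).
have hlt i : H i < 2 by rewrite /H ltn_ord.
have hne i : H i != H i.+1.
  by have := hf _ _ (P1 i); apply: contra => /eqP e; apply/eqP; apply: val_inj.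
have hH i : H i = (H 0 + i) %% 2.
  elim: i => [|i IH]; first by rewrite addn0 modn_small.
  have := hne i; have := hlt i.+1; lia.
have : H n = H 0 by rewrite /H -inZ_mod modnn.
rewrite hH; have := hlt 0; have : n %% 2 = 1 by rewrite modn2 hodd.
lia.
Qed.
Definition rowchk k := all (fun s => has (fun j =>
  (nth 0 s j == nth 0 s ((j + 1) %% n)) || (nth 0 s j == nth 0 s ((j + 3) %% n)))
  (iota 0 n)) (allseqs n k).

Lemma row_bound k : 3 < n -> rowchk k -> ~~ ei_colorable E k.
Proof.
move=> h3 hchk; apply/negP => /existsP [f /colP hf].
pose H j := val (f (o0, inZ j)).
have hmod j : H (j %% n) = H j by rewrite /H inZ_mod.
have hne t j : (t == 1) || (t == 3) -> H j != H (j + t).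
  case/orP => /eqP ->.
  + have := hf _ _ (P1 j); rewrite -addn1.
    by apply: contra => /eqP e; apply/eqP; apply: val_inj.
  + have := hf _ _ (P3 j h3).
    by apply: contra => /eqP e; apply/eqP; apply: val_inj.
pose L := [seq H j | j <- iota 0 n].
have hL : L \in allseqs n k.
  have -> : n = size L by rewrite size_map size_iota.
  apply: mem_allseqs; apply/allP => x /mapP [j _ ->]; exact: ltn_ord.
have hnth j : j < n -> nth 0 L j = H j.
  by move=> hj; rewrite (nth_map 0) ?size_iota // nth_iota.
move/allP/(_ _ hL)/hasP: hchk => [j]; rewrite mem_iota /= => hj.
rewrite !hnth ?ltn_pmod ?n_pos // !hmod.
by case/orP => /eqP e; [move: (hne 1 j isT) | move: (hne 3 j isT)]; rewrite e eqxx.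
Qed.
End LB.

Lemma clique_bound (T : finType) (e : rel T) (W : seq T) k :
  uniq W ->
  all (fun u => all (fun v => (u == v) ||
     has (fun x => has (fun y => [&& uniq [:: u; x; y; v], e u x, e x y & e y v]) W) W) W) W ->
  ei_colorable e k -> size W <= k.
Proof.
move=> hW hall /existsP [f hf].
have inj : {in W &, injective f}.
  move=> u v hu hv efuv; apply/eqP; apply/negPn/negP => huv.
  move/allP/(_ u hu)/allP/(_ v hv): hall; rewrite (negbTE huv) /= => /p4_has hp.
  by move/forallP/(_ u)/forallP/(_ v)/implyP/(_ hp): hf; rewrite efuv eqxx.
have hu : uniq (map f W) by rewrite (map_inj_in_uniq inj).
rewrite -(size_map f) -(card_uniqP hu).
by apply: leq_trans (max_card _) _; rewrite card_ord.
Qed.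

Section LBfix.
Variables (m : nat).
Hypothesis hm : 1 < m.

Definition h23 : 2 < 3 := isT.
Definition W3 : seq ('I_m * 'I_3) :=
  [:: (o0 hm, inZ h23 0); (o0 hm, inZ h23 1); (o0 hm, inZ h23 2);
      (o1 hm, inZ h23 0); (o1 hm, inZ h23 1); (o1 hm, inZ h23 2)].

Lemma LB3 : ~~ ei_colorable (cart_rel (path_rel m) (cycle_rel 3)) 5.
Proof.
apply/negP => hc.
have : size W3 <= 5 by apply: (clique_bound _ _ hc); vm_compute.
by [].
Qed.
Definition h25 : 2 < 5 := isT.
Definition h27 : 2 < 7 := isT.
Lemma LB5 : ~~ ei_colorable (cart_rel (path_rel m) (cycle_rel 5)) 4.
Proof. by apply: (row_bound hm h25) => //; vm_compute. Qed.
Lemma LB7 : ~~ ei_colorable (cart_rel (path_rel m) (cycle_rel 7)) 3.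
Proof. by apply: (row_bound hm h27) => //; vm_compute. Qed.
End LBfix.


Theorem theorem4p4 (m n : nat) : 2 <= m -> 3 <= n ->
  let c := chi_ei (cart_rel (path_rel m) (cycle_rel n)) in
  [/\ n = 3 -> c = 6,
      n = 5 -> c = 5,
      n = 7 -> c = 4,
      ~~ odd n -> c = 2
    & odd n -> 9 <= n -> c = 3].
Proof.
move=> hm hn c; rewrite /c; split.
- move=> e; subst n; apply: chi_eq.
  + exact: (@fixed_colorable m 2 6 isT (@tab 2 5 rows3) chk3).
  + exact: (LB3 hm).
- move=> e; subst n; apply: chi_eq.
  + exact: (@fixed_colorable m 4 5 isT (@tab 4 4 rows5) chk5).
  + exact: (LB5 hm).
- move=> e; subst n; apply: chi_eq.
  + exact: (@fixed_colorable m 6 4 isT (@tab 6 3 rows7) chk7).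
  + exact: (LB7 hm).
- move=> he; apply: chi_eq.
  + by apply: even_colorable => //; apply: leq_trans hn.
  + exact: (LB1 hm hn).
- move=> ho h9; apply: chi_eq; last exact: (LB2 hm hn ho).
  have hn2 : n %% 2 = 1 by rewrite modn2 ho.
  have [e|[e|h13]] : n = 9 \/ n = 11 \/ 13 <= n by lia.
  + subst n; exact: (@fixed_colorable m 8 3 isT (@tab 8 2 rows9) chk9).
  + subst n; exact: (@fixed_colorable m 10 3 isT (@tab 10 2 rows11) chk11).
  + exact: odd_colorable.
Qed.
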